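(* Let $B$ be a Batanin tree of dimension $d$ and $X$ a non-empty set of maximal positions of $B$. Then $\dim(\mathrm{fun}_X B)=d+1$ and $\partial_d(\mathrm{fun}_X B)=B$.
   Context: Batanin trees are generated inductively: for every finite list $B_1,\dots,B_n$ ($n\ge0$) of Batanin trees there is a tree $[B_1,\dots,B_n]$; $\dim[B_1,\dots,B_n]=\max_i(\dim B_i+1)$, with $\dim[\,]=0$. The suspension $\Sigma Y$ of a globular set has $0$-cells $v_-,v_+$ and $(\Sigma Y)_{n+1}=Y_n$. Positions: $\mathrm{Pos}([B_1,\dots,B_n])=\Sigma\mathrm{Pos}(B_1)\vee\cdots\vee\Sigma\mathrm{Pos}(B_n)$ (wedge sum gluing $v_+$ of each summand to $v_-$ of the next; a single point if $n=0$), with $\mathrm{inc}_i\colon\Sigma\mathrm{Pos}(B_i)\to\mathrm{Pos}(B)$ the summand inclusions. A position of $B$ is maximal if its dimension equals $\dim B$. Boundary: $\partial_0B=[\,]$, $\partial_{k+1}[B_1,\dots,B_n]=[\partial_kB_1,\dots,\partial_kB_n]$ (so $\partial_kB=B$ when $k\ge\dim B$). Functorialisation of a tree $B$ with respect to a set $X$ of maximal positions: $\mathrm{fun}_\emptyset B=B$; $\mathrm{fun}_X[\,]=[[\,]]$ for $X\neq\emptyset$; and for $X\neq\emptyset$, $\mathrm{fun}_X[B_1,\dots,B_n]=[\mathrm{fun}_{X_1}B_1,\dots,\mathrm{fun}_{X_n}B_n]$, where $X_i$ is the set of positions $p$ of $B_i$ with $\mathrm{inc}_i(\Sigma p)\in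 X$. *)

(* Defs.v *)
From Stdlib Require Import List Arith.
Import ListNotations.

(* A Batanin tree [B_1,...,B_n] is [Node [B_1;...;B_n]]. *)
Inductive tree : Type := Node : list tree -> tree.

Fixpoint tdim (B : tree) : nat :=
  match B with
  | Node l =>
      (fix m (l : list tree) : nat :=
         match l with
         | nil => 0
         | b :: l' => Nat.max (S (tdim b)) (m l')
         end) l
  end.

(* Cells of Pos(B) = Sigma Pos(B_1) v ... v Sigma Pos(B_n):
   - [PV j] is the j-th 0-cell (0 <= j <= n) of the wedge (a single point if n = 0);
   - [PS i p] is inc_i (Sigma p) for a cell p of Pos(B_i) (indices i from 0). *)
Inductive pos : Type :=
| PV : nat -> pos
| PS : nat -> pos -> pos.

Fixpoint pdim (p : pos) : nat :=
  match p with PV _ => 0 | PS _ q => S (pdim q) end.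

Fixpoint is_pos (B : tree) (p : pos) {struct p} : Prop :=
  match B, p with
  | Node l, PV j => j <= length l
  | Node l, PS i q => i < length l /\ is_pos (nth i l (Node nil)) q
  end.

Definition is_max_pos (B : tree) (p : pos) : Prop :=
  is_pos B p /\ pdim p = tdim B.

Fixpoint bdry (k : nat) (B : tree) : tree :=
  match k with
  | 0 => Node nil
  | S k' => match B with Node l => Node (map (bdry k') l) end
  end.

(* X_i = { p | inc_i (Sigma p) \in X }, for a finite set X given as a list *)
Definition subpos (i : nat) (X : list pos) : list pos :=
  flat_map (fun q => match q with
                     | PS j p => if Nat.eqb j i then [p] else []
                     | PV _ => []
                     end) X.

Fixpoint fnc (X : list pos) (B : tree) {struct B} : tree :=
  match X with
  | nil => B
  | _ :: _ =>
      match B with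
      | Node l =>
          match l with
          | nil => Node [Node nil]
          | _ :: _ =>
              Node ((fix go (i : nat) (l : list tree) : list tree :=
                       match l with
                       | nil => nil
                       | b :: l' => fnc (subpos i X) b :: go (S i) l'
                       end) 0 l)
          end
      end
  end.

(* Main.v *)
Require Import Defs.
From Stdlib Require Import List Arith Lia.
Import ListNotations.

Fixpoint goF (X : list pos) (i : nat) (l : list tree) : list tree :=
  match l with nil => nil | b :: l' => fnc (subpos i X) b :: goF X (S i) l' end.

Lemma go_eq X : forall l i, (fix go (i : nat) (l0 : list tree) {struct l0} : list tree :=
        match l0 with
        | [] => []
        | b0 :: l' => fnc (subpos i X) b0 :: go (S i) l'
        end) i l = goF X i l.
Proof. induction l as [|b l IH]; intros i; [reflexivity|]. simpl. f_equal. apply IH. Qed.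

Lemma fnc_cons x X' b l : fnc (x :: X') (Node (b :: l)) = Node (goF (x :: X') 0 (b :: l)).
Proof. exact (f_equal Node (go_eq (x :: X') (b :: l) 0)). Qed.

Lemma tdim_cons b l : tdim (Node (b :: l)) = Nat.max (S (tdim b)) (tdim (Node l)).
Proof. reflexivity. Qed.

Lemma tdim_nth l i : i < length l -> S (tdim (nth i l (Node nil))) <= tdim (Node l).
Proof.
  revert i; induction l as [|b l IH]; intros i H; simpl in H; [lia|].
  rewrite tdim_cons. destruct i; cbn [nth]. lia. specialize (IH i ltac:(lia)). lia.
Qed.

Lemma tdim_in l b : In b l -> S (tdim b) <= tdim (Node l).
Proof.
  induction l as [|c l IH]; intros H; [destruct H|]. rewrite tdim_cons.
  destruct H as [<-|H]. lia. specialize (IH H). lia.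
Qed.

Lemma pdim_le p : forall B, is_pos B p -> pdim p <= tdim B.
Proof.
  induction p as [j|i q IH]; intros [l] H; simpl. lia.
  destruct H as [H1 H2]. apply IH in H2. pose proof (tdim_nth l i H1). simpl in H. lia.
Qed.

Lemma bdry_id k : forall B, tdim B <= k -> bdry k B = B.
Proof.
  induction k as [|k IH]; intros [l] H.
  - destruct l as [|b l]; [reflexivity|]. rewrite tdim_cons in H. lia.
  - simpl. f_equal. assert (forall b, In b l -> bdry k b = b).
    { intros b Hb. apply IH. pose proof (tdim_in l b Hb). lia. }
    clear H. induction l as [|b l IHl]; [reflexivity|]. simpl.
    rewrite H0 by (left; reflexivity). f_equal. apply IHl. intros; apply H0; right; auto.
Qed.

Lemma in_subpos k X q : In q (subpos k X) -> In (PS k q) X.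
Proof.
  unfold subpos. intros H. apply in_flat_map in H. destruct H as [x [Hx Hq]].
  destruct x as [j|j p]; [destruct Hq|].
  destruct (Nat.eqb_spec j k); [|destruct Hq]. destruct Hq as [<-|[]]. subst; auto.
Qed.

Lemma list_lemma X d' : forall l i,
  (forall j, j < length l ->
     S (tdim (fnc (subpos (i+j) X) (nth j l (Node nil)))) <= S (S d') /\
     bdry d' (fnc (subpos (i+j) X) (nth j l (Node nil))) = nth j l (Node nil) /\
     (subpos (i+j) X <> nil -> tdim (fnc (subpos (i+j) X) (nth j l (Node nil))) = S d')) ->
  tdim (Node (goF X i l)) <= S (S d') /\ map (bdry d') (goF X i l) = l /\
  ((exists j, j < length l /\ subpos (i+j) X <> nil) -> tdim (Node (goF X i l)) = S (S d')).
Proof.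
  induction l as [|b l IH]; intros i H.
  - simpl. split; [lia|]. split; [reflexivity|]. intros [j [Hj _]]. simpl in Hj; lia.
  - simpl goF. rewrite tdim_cons. simpl map.
    destruct (H 0 ltac:(simpl; lia)) as [A0 [B0 C0]]. rewrite Nat.add_0_r in *. simpl nth in *.
    destruct (IH (S i)) as [A1 [B1 C1]].
    { intros j Hj. replace (S i + j) with (i + S j) by lia. apply (H (S j)). simpl; lia. }
    split; [lia|]. split; [rewrite B0, B1; reflexivity|].
    intros [j [Hj Hs]]. destruct j as [|j].
    + rewrite Nat.add_0_r in Hs. specialize (C0 Hs). lia.
    + assert (tdim (Node (goF X (S i) l)) = S (S d')).
      { apply C1. exists j. split. simpl in Hj; lia. replace (S i + j) with (i + S j) by lia. auto. }
      lia.
Qed.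

Theorem lemma4p6 (B : tree) (d : nat) (X : list pos)
  (hdim : tdim B = d)
  (hne : X <> nil)
  (hmax : forall p, In p X -> is_max_pos B p) :
  tdim (fnc X B) = S d /\ bdry d (fnc X B) = B.
Proof.
  revert B X hdim hne hmax. induction d as [|d' IH]; intros [L] X hdim hne hmax.
  - destruct L as [|b L]; [|rewrite tdim_cons in hdim; lia].
    destruct X; [congruence|]. simpl. auto.
  - destruct L as [|b0 L']; [simpl in hdim; discriminate|].
    destruct X as [|x X']; [congruence|].
    rewrite fnc_cons. set (L := b0 :: L') in *. set (X := x :: X') in *.
    destruct (list_lemma X d' L 0) as [A [Bq C]].
    + intros j Hj. cbn [Nat.add]. pose proof (tdim_nth L j Hj) as Hd. rewrite hdim in Hd.
      set (b := nth j L (Node nil)) in *.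
      destruct (subpos j X) as [|q Q] eqn:E.
      * assert (fnc [] b = b) as ->. { destruct b; reflexivity. }
        split; [lia|]. split; [apply bdry_id; lia| congruence].
      * assert (Hq : forall p, In p (q :: Q) -> is_max_pos b p).
        { intros p Hp. rewrite <- E in Hp. apply in_subpos in Hp. apply hmax in Hp.
          destruct Hp as [[_ Hp1] Hp2]. rewrite hdim in Hp2. simpl in Hp2.
          split; auto. pose proof (pdim_le p b Hp1). lia. }
        assert (tdim b = d').
        { destruct (Hq q (or_introl eq_refl)) as [_ Hq2]. destruct (hmax (PS j q)).
          apply in_subpos. rewrite E. left; auto. cbn [pdim] in H0. rewrite hdim in H0. lia. }
        destruct (IH b (q :: Q) H ltac:(congruence) Hq) as [I1 I2].
        split; [lia|]. split; auto.
    + split.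
      * apply C. destruct (hmax x (or_introl eq_refl)) as [Hp Hd].
        destruct x as [k|k q]; [cbn [pdim] in Hd; lia|]. destruct Hp as [Hk _].
        exists k. split; auto. cbn [Nat.add]. intros E.
        assert (In q (subpos k X)). { unfold subpos. apply in_flat_map. exists (PS k q).
          split. left; auto. rewrite Nat.eqb_refl. left; auto. }
        rewrite E in H; destruct H.
      * cbn [bdry]. rewrite Bq. reflexivity.
Qed.
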